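(* Let $k\ge 2$, $p\in(0,1)$, $q=1-p$. For all $n\ge 1$, $$M^{(k)}_n(p)=(k-1)n-\frac pq\sum_{i=0}^{n-1}\big(1-f^{(k)}_i\big).$$
   Context: Matchbox process: fix integers $k\ge 2$, $n\ge 1$ and $p\in(0,1)$, $q=1-p$. Initially $k$ boxes each contain $n$ matches. At each time step, independently, with probability $p$ a match is removed from a box currently containing the largest number of matches, and with probability $q$ from a box currently containing the smallest number (ties broken arbitrarily). The process is run until some box first becomes empty; the residue is the total number of matches in the other $k-1$ boxes at that time, and $M^{(k)}_n(p)$ is its expectation. Let $s^{(k)}_i=\frac{k-1}{ki-1}\binom{ki-1}{i-1}$ ($i\ge1$), $S^{(k)}(z)=\sum_{i\ge1}s^{(k)}_iz^i$, and define $f^{(k)}_0,f^{(k)}_1,\dots$ by the formal power series identity $\sum_{i\ge0}f^{(k)}_iz^i=\dfrac{1}{1-\frac1qS^{(k)}(p^{k-1}qz)}$. ($f^{(k)}_i$ is the probability that the process is in a state with all boxes equal after $ki$ steps.) *)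

(* Defs.v *)
From mathcomp Require Import all_boot all_order all_algebra.
Set Implicit Arguments. Unset Strict Implicit. Unset Printing Implicit Defensive.
Import Order.TTheory GRing.Theory Num.Theory.
Local Open Scope ring_scope.

(* A state of the matchbox process: the list of box contents (length k). *)
Definition maxbox (s : seq nat) : nat := foldr maxn 0%N s.
Definition minbox (s : seq nat) : nat := foldr minn (head 0%N s) s.

Definition take_from (s : seq nat) (i : nat) : seq nat :=
  set_nth 0%N s i (nth 0%N s i).-1.

(* ties broken by choosing the first box achieving the max / min *)
Definition step_max (s : seq nat) : seq nat := take_from s (index (maxbox s) s).
Definition step_min (s : seq nat) : seq nat := take_from s (index (minbox s) s).

(* Expected residue starting from state s, by first-step analysis; [fuel]
   bounds the number of remaining steps (each step removes one match, so
   fuel = total number of matches suffices). *)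
Fixpoint exp_residue (R : realFieldType) (p : R) (fuel : nat) (s : seq nat) : R :=
  match fuel with
  | 0%N => (sumn s)%:R
  | fuel'.+1 =>
      if (0%N \in s) then (sumn s)%:R
      else p * exp_residue p fuel' (step_max s)
           + (1 - p) * exp_residue p fuel' (step_min s)
  end.

Definition M (R : realFieldType) (k n : nat) (p : R) : R :=
  exp_residue p (k * n) (nseq k n).

Definition s_coef (R : realFieldType) (k i : nat) : R :=
  (k.-1)%:R / (k * i).-1%:R * ('C((k * i).-1, i.-1))%:R.

(* coefficient of z^j in 1 - (1/q) S^(k)(p^(k-1) q z), q = 1 - p *)
Definition denom_coef (R : realFieldType) (k : nat) (p : R) (j : nat) : R :=
  if j == 0%N then 1
  else - ((1 - p)^-1 * s_coef R k j * (p ^+ k.-1 * (1 - p)) ^+ j).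

(* f is the coefficient sequence of 1/(1 - (1/q) S^(k)(p^(k-1) q z)),
   i.e. (sum_i f_i z^i) * (1 - (1/q) S(p^(k-1) q z)) = 1 as formal power series *)
Definition is_f_seq (R : realFieldType) (k : nat) (p : R) (f : nat -> R) : Prop :=
  forall m : nat,
    \sum_(i < m.+1) f i * denom_coef k p (m - i) = (m == 0%N)%:R.

(* Main.v *)
Require Import Defs.
From mathcomp Require Import all_boot all_order all_algebra.
From mathcomp Require Import zify ring lra.
Import Order.TTheory GRing.Theory Num.Theory.

Lemma foldr_minn_le a s y : y \in a :: s -> (foldr minn a s <= y)%N.
Proof.
elim: s => [|x s IH] /=; first by rewrite inE => /eqP ->.
move=> Hy; rewrite geq_min; move: Hy; rewrite !inE => /orP[Hy|/orP[/eqP->|Hy]].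
- by rewrite IH ?orbT // inE Hy.
- by rewrite leqnn.
- by rewrite IH ?orbT // inE Hy orbT.
Qed.

Lemma foldr_minn_mem a s : foldr minn a s \in a :: s.
Proof.
elim: s => [|x s IH] /=; first by rewrite mem_head.
rewrite /minn; case: ifP => _; first by rewrite !inE eqxx orbT.
move: IH; rewrite !inE => /orP[->|->] //; by rewrite !orbT.
Qed.

Lemma foldr_maxn_ge s y : y \in s -> (y <= foldr maxn 0 s)%N.
Proof.
elim: s => [|x s IH] //=; rewrite inE => /orP[/eqP->|H].
- by rewrite leq_max leqnn.
- by rewrite leq_max IH ?orbT.
Qed.

Lemma foldr_maxn_mem s : s != [::] -> foldr maxn 0 s \in s.
Proof.
elim: s => [|x s IH] //= _.
rewrite /maxn; case: ifP => H; last by rewrite mem_head.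
case: s IH H => [|y s] IH H; first by [].
by rewrite inE IH ?orbT.
Qed.

Lemma minbox_le s y : y \in s -> (minbox s <= y)%N.
Proof. case: s => [|x s] //= H; apply: foldr_minn_le; by rewrite inE H orbT. Qed.

Lemma minbox_mem s : s != [::] -> minbox s \in s.
Proof.
case: s => [|x s] // _. rewrite /minbox /=. have := foldr_minn_mem x (x :: s).
rewrite [foldr _ _ (_ :: _)]/= inE => /orP[/eqP ->|//]. by rewrite mem_head.
Qed.

Lemma maxbox_ge s y : y \in s -> (y <= maxbox s)%N.
Proof. exact: foldr_maxn_ge. Qed.

Lemma maxbox_mem s : s != [::] -> maxbox s \in s.
Proof. exact: foldr_maxn_mem. Qed.

Lemma minbox_eq s m : m \in s -> (forall y, y \in s -> m <= y)%N -> minbox s = m.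
Proof.
move=> Hm Hall; apply/eqP; rewrite eqn_leq minbox_le // Hall //.
by apply: minbox_mem; case: s Hm Hall.
Qed.

Lemma sumn_ge s m : (forall y, y \in s -> m <= y)%N -> (size s * m <= sumn s)%N.
Proof.
elim: s => [|x s IH] //= H. rewrite mulSn leq_add ?H ?mem_head //.
by apply: IH => y Hy; apply: H; rewrite inE Hy orbT.
Qed.

Lemma sumn_gt s m y : (forall y, y \in s -> m <= y)%N -> y \in s -> (m < y)%N ->
  (size s * m < sumn s)%N.
Proof.
elim: s => [|x s IH] //= H; rewrite inE => /orP[/eqP->|Hy] Hmy.
- rewrite mulSn -addSn leq_add //. apply: sumn_ge => z Hz; apply: H; by rewrite inE Hz orbT.
- rewrite mulSn -addnS leq_add ?H ?mem_head //. apply: IH => // z Hz; apply: H; by rewrite inE Hz orbT.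
Qed.

Lemma sumn_le s m : (forall y, y \in s -> y <= m)%N -> (sumn s <= size s * m)%N.
Proof.
elim: s => [|x s IH] //= H. rewrite mulSn leq_add ?H ?mem_head //.
by apply: IH => y Hy; apply: H; rewrite inE Hy orbT.
Qed.

Lemma mem_set_nth s i y : (i < size s)%N ->
  y \in set_nth 0%N s i y /\ (forall z, z \in set_nth 0%N s i y -> z = y \/ z \in s).
Proof.
move=> Hi; split.
  apply/(nthP 0%N); exists i; first by rewrite size_set_nth (maxn_idPr Hi).
  by rewrite nth_set_nth /= eqxx.
move=> z /(nthP 0%N) [j]; rewrite size_set_nth (maxn_idPr Hi) nth_set_nth /= => Hj.
case: eqP => _ <-; [by left | right; exact: mem_nth].
Qed.

Lemma size_take_from s i : (i < size s)%N -> size (take_from s i) = size s.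
Proof. by move=> Hi; rewrite /take_from size_set_nth (maxn_idPr Hi). Qed.

Lemma sumn_take_from s i : (i < size s)%N -> (0 < nth 0 s i)%N ->
  sumn (take_from s i) = (sumn s).-1.
Proof.
move=> Hi Hp; rewrite /take_from sumn_set_nth_ltn //.
have : (nth 0 s i <= sumn s)%N.
  elim: s i Hi {Hp} => [|x s IH] [|i] //= Hi; first by rewrite leq_addr.
  by rewrite (leq_trans (IH _ Hi)) // leq_addl.
lia.
Qed.

Lemma L_mem s : s != [::] -> minbox s \in s. Proof. exact: minbox_mem. Qed.
Lemma Mx_mem s : s != [::] -> maxbox s \in s. Proof. exact: maxbox_mem. Qed.
Lemma L_pos s : s != [::] -> 0%N \notin s -> (0 < minbox s)%N.
Proof. move=> Hne H0; rewrite lt0n; apply: contra H0 => /eqP <-; exact: L_mem. Qed.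
Lemma iL_lt s : s != [::] -> (index (minbox s) s < size s)%N.
Proof. by move=> Hne; rewrite index_mem L_mem. Qed.
Lemma iMx_lt s : s != [::] -> (index (maxbox s) s < size s)%N.
Proof. by move=> Hne; rewrite index_mem Mx_mem. Qed.

Lemma step_min_size s : s != [::] -> size (step_min s) = size s.
Proof. move=> Hne; apply: size_take_from; exact: iL_lt. Qed.
Lemma step_max_size s : s != [::] -> size (step_max s) = size s.
Proof. move=> Hne; apply: size_take_from; exact: iMx_lt. Qed.
Lemma step_min_sum s : s != [::] -> 0%N \notin s -> sumn (step_min s) = (sumn s).-1.
Proof.
move=> Hne H0; apply: sumn_take_from; first exact: iL_lt.
by rewrite nth_index ?L_mem // L_pos.
Qed.
Lemma step_max_sum s : s != [::] -> 0%N \notin s -> sumn (step_max s) = (sumn s).-1.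
Proof.
move=> Hne H0; apply: sumn_take_from; first exact: iMx_lt.
rewrite nth_index ?Mx_mem //.
by rewrite (leq_trans (@L_pos s Hne H0)) // maxbox_ge // L_mem.
Qed.

Lemma step_min_min s : s != [::] -> minbox (step_min s) = (minbox s).-1.
Proof.
move=> Hne; rewrite /step_min /take_from nth_index ?L_mem //.
have [Hm Hall] := @mem_set_nth s _ (minbox s).-1 (@iL_lt s Hne).
apply: minbox_eq => // z /Hall [->//|/minbox_le]; lia.
Qed.

Lemma step_max_min s : s != [::] ->
  minbox (step_max s) = if maxbox s == minbox s then (minbox s).-1 else minbox s.
Proof.
move=> Hne; rewrite /step_max /take_from nth_index ?Mx_mem //.
have [Hm Hall] := @mem_set_nth s _ (maxbox s).-1 (@iMx_lt s Hne).
have HLM : (minbox s <= maxbox s)%N by apply: maxbox_ge; exact: L_mem.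
case: eqP => HML.
  apply: (@minbox_eq _ (minbox s).-1); first by rewrite -HML.
  move=> z /Hall [->|/minbox_le]; lia.
apply: (@minbox_eq _ (minbox s)).
  apply/(nthP 0%N); exists (index (minbox s) s).
    by rewrite size_set_nth (maxn_idPr (@iMx_lt s Hne)) iL_lt.
  rewrite nth_set_nth /=; case: eqP => [Heq|_]; last by rewrite nth_index // L_mem.
  have : nth 0%N s (index (minbox s) s) = nth 0%N s (index (maxbox s) s) by rewrite Heq.
  by rewrite !nth_index ?L_mem ?Mx_mem // => E; case: HML.
move=> z /Hall [->|/minbox_le]; lia.
Qed.

Lemma sum_ge_L s : (size s * minbox s <= sumn s)%N.
Proof. by apply: sumn_ge => y /minbox_le. Qed.

Lemma sum_eq_L s : maxbox s = minbox s -> sumn s = (size s * minbox s)%N.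
Proof.
move=> E; apply/eqP; rewrite eqn_leq sum_ge_L andbT.
by apply: sumn_le => y /maxbox_ge; rewrite E.
Qed.

Lemma sum_gt_L s : s != [::] -> maxbox s <> minbox s -> (size s * minbox s < sumn s)%N.
Proof.
move=> Hne E; apply: (@sumn_gt _ _ (maxbox s)); first by move=> y /minbox_le.
  exact: Mx_mem.
have : (minbox s <= maxbox s)%N by apply: maxbox_ge; exact: L_mem.
rewrite leq_eqVlt => /orP[/eqP H|//]; by case: E.
Qed.

Local Open Scope ring_scope.

Definition Nc (R : realFieldType) (k D u : nat) : R :=
  if D == 0%N then (u == 0%N)%:R
  else D%:R / (D + k * u)%:R * ('C(D + k * u, u))%:R.

Lemma Nc_S (R : realFieldType) k D w :
  Nc R k D w.+1 = D%:R / (D + k * w.+1)%:R * ('C(D + k * w.+1, w.+1))%:R.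
Proof. rewrite /Nc; case: eqP => [->|//]; by rewrite !mul0r. Qed.

Lemma Nc_rec (R : realFieldType) k D w : (1 <= k)%N ->
  Nc R k D.+1 w.+1 = Nc R k D w.+1 + Nc R k (D + k) w.
Proof.
move=> Hk; rewrite !Nc_S /Nc /=.
have -> : (D + k == 0)%N = false by apply/eqP; lia.
set T := (D + k * w.+1)%N.
have ET : (D.+1 + k * w.+1 = T.+1)%N by rewrite /T; lia.
have ET' : (D + k + k * w = T)%N by rewrite /T; lia.
rewrite ET ET' binS.
have Hrel := mul_bin_left T w.
have HTw : (T - w = D + (k - 1) * w.+1 + 1)%N by rewrite /T; nia.
rewrite HTw in Hrel.
have Hrel' : ('C(T, w.+1))%:R = ((D + (k - 1) * w.+1 + 1)%N%:R / (w.+1)%:R) * ('C(T, w))%:R :> R.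
  rewrite mulrAC -natrM -Hrel natrM mulrAC divff ?mul1r //.
  by rewrite pnatr_eq0.
rewrite natrD Hrel'.
have HT : (T%:R : R) != 0 by rewrite pnatr_eq0 /T; lia.
have HT1 : (T.+1%:R : R) != 0 by rewrite pnatr_eq0.
have Hw : ((w.+1)%:R : R) != 0 by rewrite pnatr_eq0.
have ETr : (T%:R : R) = D%:R + k%:R * (w%:R + 1) by rewrite /T natrD natrM -addn1 natrD.
have Ek : ((k - 1)%:R : R) = k%:R - 1 by rewrite natrB.
rewrite !natrD !natrM Ek -[T.+1]addn1 natrD ETr -[w.+1]addn1 natrD.
rewrite -[D.+1]addn1 natrD.
field.
by rewrite -ETr !natr1 HT Hw HT1.
Qed.

Definition Fs {R : realFieldType} (f : nat -> R) (m : nat) : R := \sum_(i < m) f i.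
Definition Pc {R : realFieldType} (k : nat) (p : R) (D u : nat) : R :=
  Nc R k D u * p ^+ (D + (k - 1) * u) * (1 - p) ^+ u.
Definition Phi {R : realFieldType} (k : nat) (p : R) (f : nat -> R) (L D : nat) : R :=
  \sum_(u < L) Pc k p D u * Fs f (L - u).

Lemma Nc_0 (R : realFieldType) k D : Nc R k D 0 = 1.
Proof.
rewrite /Nc; case: eqP => // /eqP HD.
by rewrite muln0 addn0 bin0 mulr1 divff // pnatr_eq0.
Qed.

Lemma Pc_rec (R : realFieldType) k (p : R) D w : (1 <= k)%N ->
  Pc k p D.+1 w.+1 = p * Pc k p D w.+1 + (1 - p) * Pc k p (D + k) w.
Proof.
move=> Hk; rewrite /Pc Nc_rec //.
have E1 : (D.+1 + (k - 1) * w.+1 = (D + (k - 1) * w.+1).+1)%N by lia.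
have E2 : (D + k + (k - 1) * w = (D + (k - 1) * w.+1).+1)%N by nia.
rewrite E1 E2 !exprS; ring.
Qed.

Lemma Pc_0 (R : realFieldType) k (p : R) D : Pc k p D.+1 0 = p * Pc k p D 0.
Proof. by rewrite /Pc !Nc_0 !muln0 !addn0 exprS !mul1r !expr0 !mulr1. Qed.

Lemma Pc_00 (R : realFieldType) k (p : R) : Pc k p 0 0 = 1.
Proof. by rewrite /Pc Nc_0 muln0 !expr0 !mulr1. Qed.

Lemma Pc_0S (R : realFieldType) k (p : R) w : Pc k p 0 w.+1 = 0.
Proof. by rewrite /Pc /Nc /= !mul0r. Qed.

Lemma Phi_0D (R : realFieldType) k (p : R) f D : Phi k p f 0 D = 0.
Proof. by rewrite /Phi big_ord0. Qed.

Lemma Phi_L0 (R : realFieldType) k (p : R) f L : Phi k p f L 0 = Fs f L.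
Proof.
case: L => [|L]; first by rewrite Phi_0D /Fs big_ord0.
rewrite /Phi big_ord_recl /= Pc_00 mul1r subn0 big1 ?addr0 // => i _.
by rewrite Pc_0S mul0r.
Qed.

Lemma Phi_SS (R : realFieldType) k (p : R) f L D : (1 <= k)%N ->
  Phi k p f L.+1 D.+1 = p * Phi k p f L.+1 D + (1 - p) * Phi k p f L (D + k).
Proof.
move=> Hk; rewrite /Phi !big_ord_recl /= Pc_0 !subn0.
under eq_bigr do rewrite /bump leq0n add1n Pc_rec // subSS mulrDl -[(p * _) * _]mulrA -[((1 - p) * _) * _]mulrA.
under [X in _ = p * (_ + X) + _]eq_bigr do rewrite /bump leq0n add1n subSS.
rewrite big_split /= mulrDr !mulr_sumr addrA; congr (_ + _ + _); apply: eq_bigr => i _; by rewrite mulrA.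
Qed.

Lemma r_eq (R : realFieldType) k (p : R) u : (2 <= k)%N -> 1 - p != 0 ->
  (1 - p)^-1 * s_coef R k u.+1 * (p ^+ k.-1 * (1 - p)) ^+ u.+1 = Pc k p (k - 1) u.
Proof.
move=> Hk Hq; rewrite /s_coef /Pc /Nc.
have -> : (k - 1 == 0)%N = false by apply/eqP; lia.
have -> : (k * u.+1).-1 = (k - 1 + k * u)%N by nia.
have -> : k.-1 = (k - 1)%N by lia.
have -> : (k - 1 + (k - 1) * u = (k - 1) * u.+1)%N by nia.
rewrite exprMn -exprM exprS /=. set X := (_ / _ * _). set Y := p ^+ _. field; exact: Hq.
Qed.

Lemma f_0 {R : realFieldType} {k : nat} {p : R} {f : nat -> R} : is_f_seq k p f -> f 0%N = 1.
Proof.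
move=> hf; have := hf 0%N; rewrite big_ord1 /denom_coef /= mulr1 => ->; by [].
Qed.

Lemma f_rec {R : realFieldType} {k : nat} {p : R} {f : nat -> R} : (2 <= k)%N -> 1 - p != 0 ->
  is_f_seq k p f -> forall m,
  f m.+1 = \sum_(i < m.+1) f i * Pc k p (k - 1) (m - i).
Proof.
move=> Hk Hq hf m; have := hf m.+1; rewrite big_ord_recr /= subnn /denom_coef /= mulr1.
under eq_bigr => i _.
  have -> : (m.+1 - i = (m - i).+1)%N by have := ltn_ord i; lia.
  rewrite /= r_eq // mulrN.
  over.
rewrite sumrN addrC => /eqP; rewrite subr_eq0 => /eqP ->; by [].
Qed.

Lemma Fs_rec (R : realFieldType) k (p : R) f : (2 <= k)%N -> 1 - p != 0 ->
  is_f_seq k p f -> forall L, Fs f L.+1 = 1 + Phi k p f L (k - 1).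
Proof.
move=> Hk Hq hf; elim=> [|L IH].
  by rewrite Phi_0D addr0 /Fs big_ord1 (f_0 hf).
rewrite {1}/Fs big_ord_recr /= -/(Fs f L.+1) IH /Phi big_ord_recr /= subSnn.
have -> : Fs f 1 = 1 by rewrite /Fs big_ord1 (f_0 hf).
under [X in _ = 1 + (X + _)]eq_bigr => i _.
  have -> : (L.+1 - i = (L - i).+1)%N by have := ltn_ord i; lia.
  rewrite {1}/Fs big_ord_recr /= -/(Fs f (L - i)) mulrDr.
  over.
rewrite big_split /= -!addrA; congr (_ + (_ + _)).
rewrite (f_rec Hk Hq hf) (reindex_inj rev_ord_inj) /=.
rewrite big_ord_recr /= subnn (f_0 hf) mul1r subn0 mulr1.
apply: (congr1 (fun x => x + _)).
apply: eq_bigr => i _. have Hi : (i <= L)%N by exact: ltnW.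
rewrite subSS (subKn Hi). exact: mulrC.
Qed.


Definition Vf {R : realFieldType} (k : nat) (p : R) (f : nat -> R) (L D : nat) : R :=
  (k * L + D)%:R - (L%:R - p * Phi k p f L D) / (1 - p).

Lemma Vf_0 {R : realFieldType} k (p : R) f D : Vf k p f 0 D = D%:R.
Proof. by rewrite /Vf Phi_0D muln0 add0n mulr0 subr0 mul0r subr0. Qed.

Lemma Vf_S0 {R : realFieldType} k (p : R) f L : (2 <= k)%N -> 1 - p != 0 ->
  is_f_seq k p f -> Vf k p f L.+1 0 = Vf k p f L (k - 1).
Proof.
move=> Hk Hq hf; rewrite /Vf Phi_L0 (@Fs_rec _ _ _ _ Hk Hq hf).
have -> : (k * L.+1 + 0 = (k * L + (k - 1)) + 1)%N by nia.
rewrite natrD -natr1.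
set c := (_ + _)%:R. set F := Phi _ _ _ _ _.
field; exact: Hq.
Qed.

Lemma Vf_SS {R : realFieldType} k (p : R) f L D : (2 <= k)%N -> 1 - p != 0 ->
  Vf k p f L.+1 D.+1 = p * Vf k p f L.+1 D + (1 - p) * Vf k p f L (D + k).
Proof.
move=> Hk Hq; rewrite /Vf Phi_SS; last by lia.
have -> : (k * L.+1 + D.+1 = (k * L.+1 + D) + 1)%N by nia.
have -> : (k * L + (D + k) = (k * L.+1 + D))%N by nia.
rewrite natrD -natr1.
set c := (_ + _)%:R. set F1 := Phi _ _ _ _ _. set F2 := Phi _ _ _ _ _.
field; exact: Hq.
Qed.

Lemma main_lemma {R : realFieldType} k (p : R) f : (2 <= k)%N -> 1 - p != 0 ->
  is_f_seq k p f -> forall fuel s, size s = k -> (sumn s <= fuel)%N ->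
  exp_residue p fuel s = Vf k p f (minbox s) (sumn s - k * minbox s).
Proof.
move=> Hk Hq hf; elim=> [|fuel IH] s Hs Hsum.
  have HL : minbox s = 0%N.
    have := sum_ge_L s; rewrite Hs; nia.
  by rewrite HL Vf_0 muln0 subn0.
rewrite /=; case: ifP => H0.
  have HL : minbox s = 0%N by have := @minbox_le s 0%N H0; lia.
  by rewrite HL Vf_0 muln0 subn0.
have Hne : s != [::] by apply/eqP => E; rewrite E /= in Hs; lia.
have H0' : 0%N \notin s by rewrite H0.
have HLp := L_pos s Hne H0'.
have Hge := sum_ge_L s; rewrite Hs in Hge.
rewrite IH; first last.
- by rewrite step_max_sum //; lia.
- by rewrite step_max_size.
rewrite IH; first last.
- by rewrite step_min_sum //; lia.
- by rewrite step_min_size.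
rewrite step_max_min // step_min_min // step_max_sum // step_min_sum //.
case: eqP => HML.
  have HS := sum_eq_L s HML; rewrite Hs in HS.
  rewrite HS. case: (minbox s) HLp HS => [//|L] _ HS /=.
  have -> : (k * L.+1 - k * L.+1 = 0)%N by lia.
  have -> : ((k * L.+1).-1 - k * L = k - 1)%N by nia.
  rewrite Vf_S0 //; ring.
have HS := sum_gt_L s Hne HML; rewrite Hs in HS.
case: (minbox s) HLp HS Hge => [//|L] _ HS Hge /=.
have [D ED] : exists D, (sumn s - k * L.+1 = D.+1)%N by exists (sumn s - k * L.+1).-1; lia.
rewrite ED.
have -> : ((sumn s).-1 - k * L.+1 = D)%N by lia.
have -> : ((sumn s).-1 - k * L = D + k)%N by nia.
by rewrite Vf_SS.
Qed.

Theorem proposition3p4 (R : realFieldType) (k : nat) (p : R) (f : nat -> R) :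
  (2 <= k)%N -> 0 < p -> p < 1 -> is_f_seq k p f ->
  forall n : nat, (1 <= n)%N ->
    M k n p = (k.-1)%:R * n%:R - p / (1 - p) * \sum_(i < n) (1 - f i).
Proof.
move=> Hk Hp0 Hp1 hf n Hn.
have Hq : 1 - p != 0 by rewrite subr_eq0 eq_sym lt_eqF.
rewrite /M (@main_lemma _ _ _ _ Hk Hq hf) ?size_nseq ?sumn_nseq //; last by rewrite mulnC.
have -> : minbox (nseq k n) = n.
  apply: minbox_eq; first by rewrite mem_nseq eqxx andbT; lia.
  by move=> y; rewrite mem_nseq => /andP[_ /eqP ->].
rewrite mulnC subnn /Vf Phi_L0 addn0 sumrB sumr_const card_ord.
have Ek : ((k.-1)%:R : R) = k%:R - 1.
  by rewrite -subn1 natrB //; lia.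
rewrite Ek natrM /Fs.
set F := \sum_(i < n) f i.
field; exact: Hq.
Qed.
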